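(* Let $G$ be a cop-win graph and let $v$ be a vertex of corner rank $k>1$. Then for every vertex $w$ that strictly corners $v$ in $G^{(k)}$, $v$ has a neighbor of corner rank $k-1$ that is not adjacent to $w$.
   Context: All graphs are finite, nonempty, and reflexive (every vertex has a loop). $N[v]$ is the closed neighborhood of $v$ (including $v$). For distinct $v,w$, $w$ strictly corners $v$ in a graph $H$ if $N_H[v]\subsetneq N_H[w]$; $v$ is then a strict corner of $H$. Corner ranking: set $G^{(1)}=G$, $k=1$. If $G^{(k)}$ is a clique, give all its vertices rank $k$ and stop. Else if $G^{(k)}$ has no strict corners, give all its vertices rank $\infty$ and stop. Else give every strict corner of $G^{(k)}$ rank $k$, delete them to get $G^{(k+1)}$ (induced subgraph), increase $k$ and repeat. A graph is cop-win iff its corner rank (largest rank of a vertex) is finite. Standing assumption: $G$ has finite corner rank at least 2. *)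

(* Defs.v *)
(* A finite reflexive graph is a finType T (vertices) with a
   reflexive symmetric adjacency relation e : rel T. Subgraphs G^(k) are
   induced subgraphs, represented by their vertex sets H : {set T}. *)
From mathcomp Require Import all_boot.
Set Implicit Arguments. Unset Strict Implicit. Unset Printing Implicit Defensive.

Section CornerRank.
Variables (T : finType) (e : rel T).

Definition cnbhd (H : {set T}) (v : T) : {set T} := [set u in H | e v u].

Definition strictly_corners (H : {set T}) (w v : T) : bool :=
  [&& v \in H, w \in H, w != v & cnbhd H v \proper cnbhd H w].

Definition is_strict_corner (H : {set T}) (v : T) : bool :=
  [exists w, strictly_corners H w v].

Definition strict_corners (H : {set T}) : {set T} :=
  [set v | is_strict_corner H v].

Definition is_clique (H : {set T}) : bool :=
  [forall u in H, forall v in H, e u v].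

(* one deletion step: remove all strict corners (on a clique, or a graph with
   no strict corners, this does nothing) *)
Definition corner_step (H : {set T}) : {set T} := H :\: strict_corners H.

(* G^(k), for k >= 1: G^(1) = G *)
Definition stage (k : nat) : {set T} := iter k.-1 corner_step [set: T].

Definition has_corner_rank (v : T) (k : nat) : Prop :=
  [/\ 1 <= k, v \in stage k,
      is_strict_corner (stage k) v || is_clique (stage k)
    & forall j, 1 <= j -> j < k -> ~~ is_clique (stage j)].

Definition cop_win : Prop := forall v : T, exists k, has_corner_rank v k.

End CornerRank.

(* Main.v *)
Require Import Defs.
From mathcomp Require Import all_boot.

Theorem lemma3p16 (T : finType) (e : rel T)
  (e_refl : reflexive e) (e_sym : symmetric e) :
  cop_win e ->
  forall (v : T) (k : nat), has_corner_rank e v k -> 1 < k ->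
  forall w : T, strictly_corners e (stage e k) w v ->
  exists u : T, [/\ e v u, has_corner_rank e u k.-1 & ~~ e u w].
Proof.
move=> _ v k [_ vin _ nocl] hk w.
case: k hk vin nocl => [|[|k]] // _.
rewrite /stage => vin nocl.
move: vin; rewrite [k.+2.-1]/= iterS => vin.
set H' := iter k (corner_step e) [set: T] in vin *.
move=> /and4P [_ wH wv /properP [sub [x xw xv]]].
move: vin; rewrite /corner_step in_setD => /andP [vSC vH'].
have wH' : w \in H' by move: wH; rewrite in_setD => /andP [].
have nsub : ~~ (cnbhd e H' v \subset cnbhd e H' w).
  apply/negP => hs; move: vSC; rewrite in_set; apply/negP; rewrite negbK.
  apply/existsP; exists w; apply/and4P; split => //.
  have xCS : x \in corner_step e H' by move: xw; rewrite [x \in cnbhd _ _ _]in_set => /andP [].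
  have xH : x \in H' by move: xCS; rewrite /corner_step in_setD => /andP [].
  apply/properP; split => //; exists x.
  - move: xw; rewrite [x \in cnbhd _ _ _]in_set => /andP [_ ewx].
    by rewrite in_set xH ewx.
  - move: xv; rewrite [x \in cnbhd _ (corner_step _ _) _]in_set xCS /= => nv.
    by rewrite in_set negb_and nv orbT.
have [u uv uw] := subsetPn nsub.
move: uv; rewrite in_set => /andP [uH' evu].
have ewu : ~~ e w u by move: uw; rewrite in_set uH'.
have uSC : u \in strict_corners e H'.
  apply/negPn/negP => uns.
  have uH : u \in corner_step e H' by rewrite /corner_step in_setD (negbTE uns) uH'.
  have : u \in cnbhd e (corner_step e H') v by rewrite in_set uH evu.
  by move/(subsetP sub); rewrite in_set (negbTE ewu) andbF.
exists u; split => //.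
- split => //.
  + by rewrite in_set in uSC; rewrite uSC.
  + move=> j hj1 hj2; apply: nocl => //; exact: ltn_trans hj2 _.
- by rewrite e_sym.
Qed.
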